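(* Let $I$ be a compact interval and let $f\colon I\to I$ be continuous. Let $2^f\colon 2^I\to 2^I$ be the induced map $2^f(C)=f(C)$ on the hyperspace $2^I$. Then the set $\mathrm{Per}(2^f)$ of fundamental periods of periodic points of $2^f$ is equal to one of $\{1\}$, $\{1,2\}$, or $\mathbb N$.
   Context: For a compact metric space $X$, $2^X$ denotes the space of nonempty closed subsets of $X$ with the Hausdorff metric, and for continuous $f\colon X\to X$ the induced map $2^f\colon 2^X\to 2^X$ is $2^f(C)=\{f(x):x\in C\}$. For a map $g$, $\mathrm{Per}(g)$ denotes the set of all $k\in\mathbb N$ such that some point has fundamental (least) period $k$ under $g$. *)

(* Defs.v *)
From HB Require Import structures.
From mathcomp Require Import all_boot all_order all_algebra.
From mathcomp Require Import all_classical all_reals all_analysis.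
Set Implicit Arguments. Unset Strict Implicit. Unset Printing Implicit Defensive.
Import Order.TTheory GRing.Theory Num.Theory numFieldTopology.Exports numFieldNormedType.Exports.
Local Open Scope classical_set_scope.
Local Open Scope ring_scope.

Definition hyperspace (R : realType) (a b : R) (C : set R) : Prop :=
  C `<=` `[a, b] /\ C !=set0 /\ closed C.

Definition induced_map (R : realType) (f : R -> R) : set R -> set R :=
  fun C => f @` C.

Definition fund_period (T : Type) (g : T -> T) (x : T) (k : nat) : Prop :=
  (0 < k)%N /\ iter k g x = x /\ (forall j : nat, (0 < j)%N -> (j < k)%N -> iter j g x <> x).

Definition Per_hyper (R : realType) (a b : R) (f : R -> R) : set nat :=
  [set k | exists C : set R, hyperspace a b C /\ fund_period (induced_map f) C k].

(* Main.v *)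
Require Import Defs.
From HB Require Import structures.
From mathcomp Require Import all_boot all_order all_algebra.
From mathcomp Require Import all_classical all_reals all_analysis.
From mathcomp Require Import zify lra.
Import Order.TTheory GRing.Theory Num.Theory numFieldTopology.Exports numFieldNormedType.Exports.
Local Open Scope classical_set_scope.
Local Open Scope ring_scope.
Lemma iter_cont {R : realType} (F : R -> R) n :
  continuous F -> continuous (iter n F).
Proof.
move=> Fc; elim: n => [|n IH] x /=; first exact: cvg_id.
exact: (continuous_comp (IH x) (Fc _)).
Qed.

Lemma iter_comm {T : Type} (F : T -> T) m n x :
  iter m F (iter n F x) = iter n F (iter m F x).
Proof. by rewrite -!iterD addnC. Qed.

Lemma iter_rng {R : realType} {a b : R} {F : R -> R} {n : nat} (x : R) :
  (forall x, a <= F x <= b) -> (0 < n)%N -> a <= iter n F x <= b.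
Proof. by move=> Fr; case: n => // n _ /=; apply: Fr. Qed.

Lemma iter_per {T : Type} (F : T -> T) p t y :
  iter p F y = y -> iter (p * t) F y = y.
Proof.
move=> Hp; elim: t => [|t IH]; first by rewrite muln0.
by rewrite mulnS iterD IH Hp.
Qed.

Lemma ivt_le {R : realType} (g : R -> R) (s t v : R) :
  continuous g -> s <= t -> g s <= v <= g t -> exists2 c, s <= c <= t & g c = v.
Proof.
move=> gc st /andP[h1 h2].
have H : Num.min (g s) (g t) <= v <= Num.max (g s) (g t).
  by rewrite ge_min h1 /= le_max h2 orbT.
have [c cI gc'] := @IVT R g s t v st (continuous_subspaceT gc) H.
by exists c => //; move: cI; rewrite in_itv.
Qed.

Lemma ivt_ge {R : realType} (g : R -> R) (s t v : R) :
  continuous g -> s <= t -> g t <= v <= g s -> exists2 c, s <= c <= t & g c = v.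
Proof.
move=> gc st /andP[h1 h2].
have H : Num.min (g s) (g t) <= v <= Num.max (g s) (g t).
  by rewrite ge_min h1 orbT /= le_max h2.
have [c cI gc'] := @IVT R g s t v st (continuous_subspaceT gc) H.
by exists c => //; move: cI; rewrite in_itv.
Qed.
Definition isoD {R : realType} (F : R -> R) : Prop :=
  exists (y : R) (n : nat) (xb : nat -> R),
    [/\ (0 < n)%N, xb 0%N = y, (forall m, iter n F (xb m.+1) = xb m),
        cvgn xb & cvgn (fun m => iter (n * m) F y) /\
        (forall m, (0 < m)%N -> iter (n * m) F y <> y)].

Lemma iso_of {R : realType} (F : R -> R) (n : nat) (u y : R) :
  continuous F -> (0 < n)%N -> iter n F u = u -> u < y -> y < iter n F y ->
  cvgn (fun m => iter (n * m) F y) ->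
  (forall m, (0 < m)%N -> iter (n * m) F y <> y) -> isoD F.
Proof.
move=> Fc n0 hu uy yh cf ne.
set h := iter n F.
have {}hu : h u = u := hu. have {}yh : y < h y := yh.
have hc : continuous h by apply: iter_cont.
have pre_ex : forall x, exists c, u < x < h x -> u < c < x /\ h c = x.
  move=> x; case: (pselect (u < x < h x)) => [/andP[ux xh]|]; last first.
    by move=> H; exists x.
  have [c /andP[uc cx] hcx] := @ivt_le R h u x x hc (ltW ux)
      (ltac:(by rewrite hu (ltW ux) (ltW xh))).
  exists c => _; split => //; apply/andP; split.
    by rewrite lt_neqAle uc andbT; apply/eqP => ec; move: hcx; rewrite -ec hu => E;
       move: ux; rewrite E ltxx.
  by rewrite lt_neqAle cx andbT; apply/eqP => ec; move: hcx; rewrite ec => E;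
     move: xh; rewrite E ltxx.
have [pre Hpre] := choice pre_ex.
set xb := fun m => iter m pre y.
have inv : forall m, u < xb m < h (xb m).
  elim=> [|m IH] /=; first by rewrite uy yh.
  have [/andP[H1 H2] H3] := Hpre _ IH.
  rewrite /xb /= H1 /= H3; exact: H2.
have step : forall m, h (xb m.+1) = xb m /\ xb m.+1 < xb m.
  by move=> m; have [/andP[_ H2] H3] := Hpre _ (inv m).
exists y, n, xb; split => //.
- by move=> m; case: (step m).
- apply: nonincreasing_is_cvgn.
    by apply/nonincreasing_seqP => m; apply: ltW; case: (step m).
  exists u => _ [m _ <-]; by case/andP: (inv m) => /ltW.
Qed.
Lemma iterMn {T : Type} (F : T -> T) n m x :
  iter (n * m) F x = iter m (iter n F) x.
Proof. by rewrite mulnC iterM. Qed.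

Lemma iso_fix {R : realType} (F : R -> R) (n : nat) (u y w : R) :
  continuous F -> (0 < n)%N -> iter n F u = u -> iter n F w = w ->
  u < y -> iter n F y = w -> y < w -> isoD F.
Proof.
move=> Fc n0 hu hw uy hy yw.
have hm : forall m, iter m.+1 (iter n F) y = w.
  by elim=> [|m IH]; [exact: hy | rewrite iterS IH hw].
apply: (@iso_of _ F n u y Fc n0 hu uy); first by rewrite hy.
- apply: (cvgP w); rewrite -cvg_shiftS /=.
  have -> : (fun m => iter (n * m.+1) F y) = (fun=> w).
    by apply: funext => m; rewrite iterMn hm.
  exact: cvg_cst.
- move=> [|m] // _; rewrite iterMn hm => E.
  by move: yw; rewrite E ltxx.
Qed.

Lemma up_iso {R : realType} (a b : R) (F : R -> R) (n : nat) (u y0 : R) :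
  continuous F -> (forall x, a <= F x <= b) -> (0 < n)%N ->
  iter n F u = u -> u < y0 -> y0 < iter n F y0 -> isoD F.
Proof.
move=> Fc Fr n0 hu uy0 y0h.
set h := iter n F.
have {}hu : h u = u := hu. have {}y0h : y0 < h y0 := y0h.
have hc : continuous h by apply: iter_cont.
case: (pselect (forall m, iter m h y0 < iter m.+1 h y0)) => [inc|].
  have ge : forall m, y0 <= iter m h y0.
    by elim=> [|m IH]; [rewrite /= lexx | exact: le_trans IH (ltW (inc m))].
  apply: (@iso_of _ F n u y0 Fc n0 hu uy0 y0h).
  - have -> : (fun m => iter (n * m) F y0) = (fun m => iter m h y0).
      by apply: funext => m; rewrite iterMn.
    apply: nondecreasing_is_cvgn.
      by apply/nondecreasing_seqP => m; apply: ltW.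
    exists b => _ [[|m] _ <-] /=.
      by apply: le_trans (ltW y0h) _; case/andP: (iter_rng y0 Fr n0).
    by case/andP: (iter_rng (iter m h y0) Fr n0).
  - move=> [|m] // _; rewrite iterMn => E.
    by have := le_lt_trans (ge m) (inc m); rewrite [X in _ < X]E ltxx.
move=> /existsNP[m0 /negP]; rewrite -leNgt => Pm0.
have exP : exists m, iter m.+1 h y0 <= iter m h y0 by exists m0.
case: (ex_minnP exP) => m Pm mmin.
case: m Pm mmin => [|m] Pm mmin.
  by move: Pm; rewrite /= leNgt y0h.
have lt_before : forall j, (j <= m)%N -> iter j h y0 < iter j.+1 h y0.
  move=> j jm; rewrite ltNge; apply/negP => Pj.
  by have := mmin j Pj; rewrite ltnNge jm.
have ge : forall j, (j <= m)%N -> y0 <= iter j h y0.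
  elim=> [|j IH] jm; first by rewrite lexx.
  exact: le_trans (IH (ltnW jm)) (ltW (lt_before j (ltnW jm))).
set s := iter m h y0.
set t := iter m.+1 h y0.
have ts : t = h s by [].
have st : s < t := lt_before m (leqnn m).
have htt : h t <= t := Pm.
have ys : y0 <= s := ge m (leqnn m).
have us : u < s := lt_le_trans uy0 ys.
have [Et|Nt] := eqVneq (h t) t.
  exact: (@iso_fix _ F n u s t Fc n0 hu Et us (esym ts) st).
have htlt : h t < t by rewrite lt_neqAle Nt htt.
have gc : continuous (fun x => h x - x).
  by move=> x; apply: continuousB; [apply: hc | apply: cvg_id].
have [w /andP[sw wt] gw] := @ivt_ge R (fun x => h x - x) s t 0 gc (ltW st)
  (ltac:(by rewrite subr_le0 htt /= -ts subr_ge0 ltW)).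
have hw : h w = w by apply/eqP; rewrite -subr_eq0 gw.
have ws : w != s by apply/eqP => E; move: hw; rewrite E -ts => E'; move: st; rewrite E' ltxx.
have sw' : s < w by rewrite lt_neqAle eq_sym ws sw.
have [y /andP[uy ys'] hy] := @ivt_le R h u s w hc (ltW us)
  (ltac:(by rewrite hu -ts wt (le_trans (ltW us) sw))).
have uy' : u < y.
  rewrite lt_neqAle uy andbT; apply/eqP => E; move: hy; rewrite -E hu => E'.
  by move: (lt_trans us sw'); rewrite E' ltxx.
exact: (@iso_fix _ F n u y w Fc n0 hu hw uy' hy (le_lt_trans ys' sw')).
Qed.
Lemma iterN {R : realType} (F : R -> R) m x :
  iter m (fun z => - F (- z)) x = - iter m F (- x).
Proof. by elim: m => [|m IH]; rewrite ?opprK //= IH opprK. Qed.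

Lemma isoD_neg {R : realType} (F : R -> R) : isoD (fun z => - F (- z)) -> isoD F.
Proof.
move=> [y [n [xb [n0 x0 xs cb [cf ne]]]]].
exists (- y), n, (fun m => - xb m); split => //.
- by rewrite x0.
- by move=> m; move: (xs m); rewrite iterN => <-; rewrite opprK.
- exact: is_cvgN.
- split.
    have -> : (fun m => iter (n * m) F (- y)) = (fun m => - iter (n * m) (fun z => - F (- z)) y).
      by apply: funext => m; rewrite iterN opprK.
    exact: is_cvgN.
  move=> m m0 E; apply: (ne m m0).
  by rewrite iterN E opprK.
Qed.

Lemma down_iso {R : realType} (a b : R) (F : R -> R) (n : nat) (v y0 : R) :
  continuous F -> (forall x, a <= F x <= b) -> (0 < n)%N ->
  iter n F v = v -> y0 < v -> iter n F y0 < y0 -> isoD F.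
Proof.
move=> Fc Fr n0 hv y0v hy0; apply: isoD_neg.
apply: (@up_iso _ (- b) (- a) _ n (- v) (- y0)) => //.
- move=> x; apply: continuousN.
  exact: (continuous_comp (@opp_continuous _ x) (Fc _)).
- by move=> x; rewrite lerNl opprK lerNr opprK andbC; apply: Fr.
- by rewrite iterN opprK hv.
- by rewrite ltrN2.
- by rewrite iterN opprK ltrN2.
Qed.
Lemma closed_min {R : realType} (a b : R) (C : set R) :
  closed C -> C !=set0 -> C `<=` `[a, b] ->
  exists2 c0, C c0 & forall c, C c -> c0 <= c.
Proof.
move=> Ccl C0 Cab.
have hl : has_lbound C by exists a => c /Cab; rewrite /= in_itv /= => /andP[].
have := @itv_closed_infimums _ R C C0 Ccl (inf C).
move=> H; exists (inf C); last by move=> c Cc; apply: ge_inf.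
apply: H; split; first exact: ge_inf.
by move=> x lx; apply: lb_le_inf.
Qed.

Lemma closed_max {R : realType} (a b : R) (C : set R) :
  closed C -> C !=set0 -> C `<=` `[a, b] ->
  exists2 c1, C c1 & forall c, C c -> c <= c1.
Proof.
move=> Ccl C0 Cab.
have hu : has_ubound C by exists b => c /Cab; rewrite /= in_itv /= => /andP[].
have := @itv_closed_supremums _ R C C0 Ccl (sup C).
move=> H; exists (sup C); last by move=> c Cc; apply: ub_le_sup.
apply: H; split; first exact: ub_le_sup.
by move=> x lx; apply: ge_sup.
Qed.

Lemma fix_convex {R : realType} (a b : R) (F : R -> R) (n : nat) (u x v : R) :
  continuous F -> (forall x, a <= F x <= b) -> (0 < n)%N -> ~ isoD F ->
  iter n F u = u -> iter n F v = v -> u <= x <= v -> iter n F x = x.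
Proof.
move=> Fc Fr n0 nI hu hv /andP[ux xv].
have [Eu|Nu] := eqVneq u x; first by rewrite -Eu.
have [Ev|Nv] := eqVneq x v; first by rewrite Ev.
have ux' : u < x by rewrite lt_neqAle Nu ux.
have xv' : x < v by rewrite lt_neqAle Nv xv.
have [hlt|hgt|//] := ltgtP (iter n F x) x.
  by case: nI; apply: (@down_iso _ a b F n v x).
by case: nI; apply: (@up_iso _ a b F n u x).
Qed.

Lemma min_in {R : realType} (P : R -> Prop) x y : P x -> P y -> P (Num.min x y).
Proof. by move=> Px Py; case: (leP x y) => _. Qed.

Lemma max_in {R : realType} (P : R -> Prop) x y : P x -> P y -> P (Num.max x y).
Proof. by move=> Px Py; case: (leP x y) => _. Qed.
Lemma f2_id {R : realType} (a b : R) (F : R -> R) (k : nat) :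
  continuous F -> (forall x, a <= F x <= b) -> (0 < k)%N -> ~ isoD F ->
  forall x, iter (k * 2) F x = x -> F (F x) = x.
Proof.
move=> Fc Fr k0 nI.
have N0 : (0 < k * 2)%N by rewrite muln_gt0 k0.
set N := (k * 2)%N.
pose L x := iter N F x = x.
have convL : forall u x v, L u -> L v -> u <= x <= v -> L x.
  by move=> u x v Lu Lv uxv; apply: (@fix_convex _ a b F N u x v).
have FL : forall x, L x -> L (F x).
  by move=> x Lx; rewrite /L -iterSr iterS Lx.
have [N' EN] : exists N', N = N'.+1 by exists N.-1; rewrite prednK.
have Finj : forall x y, L x -> L y -> F x = F y -> x = y.
  move=> x y Lx Ly E; rewrite -Lx -Ly /L EN !iterSr E //.
have pair : forall s t, L s -> L t -> s < t -> F (F s) < F (F t).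
  move=> s t Ls Lt st.
  set lo := Num.min (Num.min s t) (Num.min (F s) (F t)).
  set hi := Num.max (Num.max s t) (Num.max (F s) (F t)).
  have Llo : L lo by apply: min_in; apply: min_in => //; apply: (FL).
  have Lhi : L hi by apply: max_in; apply: max_in => //; apply: (FL).
  have IL : forall z, z \in `[lo, hi] -> L z.
    by move=> z; rewrite in_itv /= => zI; apply: convL Llo Lhi zI.
  have inj : {in `[lo, hi] &, injective F}.
    by move=> x y xI yI; apply: Finj; apply: (IL).
  have sI : s \in `[lo, hi] by rewrite in_itv /= !ge_min !le_max !lexx ?orbT.
  have tI : t \in `[lo, hi] by rewrite in_itv /= !ge_min !le_max !lexx ?orbT.
  have FsI : F s \in `[lo, hi] by rewrite in_itv /= !ge_min !le_max !lexx ?orbT.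
  have FtI : F t \in `[lo, hi] by rewrite in_itv /= !ge_min !le_max !lexx ?orbT.
  have mono : {in `[lo, hi] &, {homo F : x y / x < y}} \/
                   {in `[lo, hi] &, {homo F : x y /~ x < y}}.
    exact: (@itv_continuous_inj_mono R F `[lo, hi] (continuous_subspaceT Fc) inj).
  case: mono => [inc|dec].
    by apply: (inc) => //; apply: (inc).
  by apply: (dec) => //; apply: (dec).
move=> x Lx.
pose phi := iter 2 F.
have Lj : forall j, L (iter j phi x).
  by elim=> [|j IH] //=; apply: (FL); apply: (FL).
have kk : iter k phi x = x by rewrite /phi -iterM.
have [k' Ek] : exists k', k = k'.+1 by exists k.-1; rewrite prednK.
have [lt|gt|//] := ltgtP (F (F x)) x.
  have dec : forall j, iter j.+1 phi x < iter j phi x.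
    elim=> [|j IH]; first exact: lt.
    exact: (pair _ _ (Lj j.+1) (Lj j) IH).
  have dec2 : forall j, iter j.+1 phi x < x.
    elim=> [|j IH] //; exact: lt_trans (dec j.+1) IH.
  by move: (dec2 k'); rewrite -Ek kk ltxx.
have inc : forall j, iter j phi x < iter j.+1 phi x.
  elim=> [|j IH]; first exact: gt.
  exact: (pair _ _ (Lj j) (Lj j.+1) IH).
have inc2 : forall j, x < iter j.+1 phi x.
  elim=> [|j IH] //; exact: lt_trans IH (inc j.+1).
by move: (inc2 k'); rewrite -Ek kk ltxx.
Qed.
Lemma fixpt {R : realType} (a b : R) (F : R -> R) :
  continuous F -> (forall x, a <= F x <= b) -> exists2 p, a <= p <= b & F p = p.
Proof.
move=> Fc Fr.
have ab : a <= b by case/andP: (Fr 0) => h1 h2; apply: le_trans h1 h2.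
have gc : continuous (fun x => F x - x).
  by move=> x; apply: continuousB; [apply: Fc | apply: cvg_id].
have [p pI gp] := @ivt_ge R (fun x => F x - x) a b 0 gc ab
  (ltac:(by case/andP: (Fr a) => h1 _; case/andP: (Fr b) => _ h2;
         rewrite subr_le0 h2 subr_ge0 h1)).
by exists p => //; apply/eqP; rewrite -subr_eq0 gp.
Qed.

Lemma iter_fix {T : Type} (F : T -> T) p n : F p = p -> iter n F p = p.
Proof. by move=> Fp; elim: n => //= n ->. Qed.

Lemma img_iter {T : Type} (F : T -> T) (k : nat) (C : set T) :
  (iter k F) @` C = C -> forall t, (iter (k * t) F) @` C = C.
Proof.
move=> HC; elim=> [|t IH].
  rewrite muln0; apply/seteqP; split => x.
    by move=> [y Cy <-].
  by move=> Cx; exists x.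
rewrite mulnS; apply/seteqP; split => x.
  move=> [y Cy <-]; rewrite iterD.
  rewrite -HC; exists (iter (k * t) F y) => //; rewrite -IH; by exists y.
move=> Cx; move: Cx; rewrite -{1}HC => -[y Cy <-].
move: Cy; rewrite -{1}IH => -[z Cz <-].
by exists z => //; rewrite iterD.
Qed.

Lemma sign_l {R : realType} (a b : R) (F : R -> R) (n : nat) (L : R -> Prop) (p x : R) :
  continuous F -> (forall x, a <= F x <= b) -> (0 < n)%N ->
  (forall z, iter n F z = z -> L z) ->
  (forall u z v, L u -> L v -> u <= z <= v -> L z) -> L p ->
  a <= x -> ~ L x -> x < p -> x < iter n F x.
Proof.
move=> Fc Fr n0 FL convL Lp ax nLx xp.
rewrite ltNge; apply/negP => hx.
have gc : continuous (fun z => iter n F z - z).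
  by move=> z; apply: continuousB; [apply: iter_cont | apply: cvg_id].
have [c /andP[ac cx] gcz] := @ivt_ge R (fun z => iter n F z - z) a x 0 gc ax
  (ltac:(by case/andP: (iter_rng a Fr n0) => h1 _; rewrite subr_le0 hx subr_ge0 h1)).
have Lc : L c by apply: FL; apply/eqP; rewrite -subr_eq0 gcz.
by apply: nLx; apply: (convL c x p) => //; rewrite cx ltW.
Qed.

Lemma sign_r {R : realType} (a b : R) (F : R -> R) (n : nat) (L : R -> Prop) (p x : R) :
  continuous F -> (forall x, a <= F x <= b) -> (0 < n)%N ->
  (forall z, iter n F z = z -> L z) ->
  (forall u z v, L u -> L v -> u <= z <= v -> L z) -> L p ->
  x <= b -> ~ L x -> p < x -> iter n F x < x.
Proof.
move=> Fc Fr n0 FL convL Lp xb nLx px.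
rewrite ltNge; apply/negP => hx.
have gc : continuous (fun z => iter n F z - z).
  by move=> z; apply: continuousB; [apply: iter_cont | apply: cvg_id].
have [c /andP[xc cb] gcz] := @ivt_ge R (fun z => iter n F z - z) x b 0 gc xb
  (ltac:(by case/andP: (iter_rng b Fr n0) => _ h2; rewrite subr_le0 h2 subr_ge0 hx)).
have Lc : L c by apply: FL; apply/eqP; rewrite -subr_eq0 gcz.
by apply: nLx; apply: (convL p x c) => //; rewrite xc ltW.
Qed.
Lemma noiso_C {R : realType} (a b : R) (F : R -> R) (k : nat) (C : set R) :
  continuous F -> (forall x, a <= F x <= b) -> (0 < k)%N -> ~ isoD F ->
  closed C -> C !=set0 -> C `<=` `[a, b] -> (iter k F) @` C = C ->
  forall c, C c -> F (F c) = c.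
Proof.
move=> Fc Fr k0 nI Ccl C0 Cab HkC.
have k20 : (0 < k * 2)%N by rewrite muln_gt0 k0.
have k40 : (0 < k * 2 * 2)%N by rewrite muln_gt0 k20.
set H := iter (k * 2) F.
pose L z := iter (k * 2 * 2) F z = z.
have f2 : forall z, L z -> F (F z) = z by apply: (@f2_id _ a b F (k * 2)).
have convL : forall u z v, L u -> L v -> u <= z <= v -> L z.
  by move=> u z v Lu Lv uzv; apply: (@fix_convex _ a b F (k * 2 * 2) u z v).
have HH : forall z, iter (k * 2 * 2) F z = H (H z) by move=> z; rewrite iterMn.
have FixH : forall z, H z = z -> L z by move=> z Hz; rewrite /L HH !Hz.
have FixL : forall z, L z -> H z = z.
  by move=> z Lz; rewrite /H iterM; apply: iter_fix; exact: f2.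
have FixHH : forall z, iter (k * 2 * 2) F z = z -> L z by [].
have HC : H @` C = C by apply: img_iter.
have [p pI Fp] := @fixpt _ a b F Fc Fr.
have Lp : L p by apply: iter_fix.
have Hp : H p = p by apply: iter_fix.
have [c0 Cc0 c0min] := @closed_min _ a b C Ccl C0 Cab.
have [c1 Cc1 c1max] := @closed_max _ a b C Ccl C0 Cab.
have Hmem : forall c, C c -> C (H c) by move=> c Cc; rewrite -HC; exists c.
have Hpre : forall c, C c -> exists c', C c' /\ H c' = c.
  by move=> c; rewrite -{1}HC => -[c' Cc' <-]; exists c'.
have Cab' : forall c, C c -> a <= c <= b.
  by move=> c /Cab; rewrite /= in_itv.
have sl : forall n x, (0 < n)%N -> (forall z, iter n F z = z -> L z) ->
    a <= x <= b -> ~ L x -> x < p -> x < iter n F x.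
  move=> n x n0 FL /andP[ax xb] nLx xp; exact: (@sign_l _ a b F n L p x).
have sr : forall n x, (0 < n)%N -> (forall z, iter n F z = z -> L z) ->
    a <= x <= b -> ~ L x -> p < x -> iter n F x < x.
  move=> n x n0 FL /andP[ax xb] nLx px; exact: (@sign_r _ a b F n L p x).
have claimA : ~ L c0 -> False.
  move=> nL0.
  have c0p : c0 < p.
    have [//|pc0|E] := ltgtP c0 p.
      have := sr _ c0 k20 FixH (Cab' _ Cc0) nL0 pc0.
      by rewrite ltNge c0min //; apply: Hmem.
    by exfalso; apply: nL0; rewrite E.
  have [c [Cc Hc]] := Hpre c0 Cc0.
  have nLc : ~ L c by move=> Lc; apply: nL0; rewrite -Hc FixL.
  have cp : p < c.
    have [cp'|//|E] := ltgtP c p.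
      have := sl _ c k20 FixH (Cab' _ Cc) nLc cp'.
      by rewrite -/H Hc ltNge c0min.
    by exfalso; apply: nLc; rewrite E.
  have nLc1 : ~ L c1.
    by move=> L1; apply: nLc; apply: (convL p c c1) => //; rewrite ltW // c1max.
  have [c2 [Cc2 Hc2]] := Hpre c1 Cc1.
  have nLc2 : ~ L c2 by move=> L2; apply: nLc1; rewrite -Hc2 FixL.
  have c2p : c2 < p.
    have [//|pc2|E] := ltgtP c2 p.
      have := sr _ c2 k20 FixH (Cab' _ Cc2) nLc2 pc2.
      by rewrite -/H Hc2 ltNge c1max.
    by exfalso; apply: nLc2; rewrite E.
  have hc : continuous H by apply: iter_cont.
  have [x /andP[px xc] Hx] := @ivt_ge R H p c c2 hc (ltW cp)
    (ltac:(by rewrite Hc Hp (ltW c2p) c0min)).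
  have nLx : ~ L x.
    move=> Lx; move: Hx; rewrite FixL // => E.
    by move: c2p; rewrite -E ltNge px.
  have px' : p < x.
    by rewrite lt_neqAle px andbT; apply/eqP => E; apply: nLx; rewrite -E.
  have xab : a <= x <= b.
    case/andP: pI => ap _; case/andP: (Cab' _ Cc) => _ cb.
    by rewrite (le_trans ap px) (le_trans xc cb).
  have := sr _ x k40 FixHH xab nLx px'.
  rewrite HH Hx Hc2 => H1.
  by move: (le_trans xc (c1max _ Cc)); rewrite leNgt H1.
have claimB : ~ L c1 -> ~ L c0.
  move=> nL1.
  have pc1 : p < c1.
    have [c1p|//|E] := ltgtP c1 p.
      have := sl _ c1 k20 FixH (Cab' _ Cc1) nL1 c1p.
      by rewrite ltNge c1max //; apply: Hmem.
    by exfalso; apply: nL1; rewrite E.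
  have [c [Cc Hc]] := Hpre c1 Cc1.
  have nLc : ~ L c by move=> Lc; apply: nL1; rewrite -Hc FixL.
  have cp : c < p.
    have [//|pc|E] := ltgtP c p.
      have := sr _ c k20 FixH (Cab' _ Cc) nLc pc.
      by rewrite -/H Hc ltNge c1max.
    by exfalso; apply: nLc; rewrite E.
  by move=> L0; apply: nLc; apply: (convL c0 c p) => //; rewrite c0min // ltW.
have L0 : L c0 by apply: contrapT => nL0; apply: claimA.
have L1 : L c1 by apply: contrapT => nL1; apply: claimA; apply: claimB.
move=> c Cc; apply: f2; apply: (convL c0 c c1) => //.
by rewrite c0min // c1max.
Qed.
Lemma closure_img {R : realType} (a b : R) (g : R -> R) (A : set R) :
  continuous g -> A `<=` `[a, b] -> g @` closure A = closure (g @` A).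
Proof.
move=> gc Aab.
have clab : closure A `<=` `[a, b].
  by rewrite [X in _ `<=` X](closure_id _).1; [apply: closureS | apply: itv_closed].
have cpt : compact (closure A).
  exact: (subclosed_compact (@closed_closure _ A) (@segment_compact _ a b) clab).
have gcpt : compact (g @` closure A).
  by apply: continuous_compact => //; apply: continuous_subspaceT.
have gcl : closed (g @` closure A) by apply: compact_closed => //; apply: Rhausdorff.
apply/seteqP; split; last first.
  rewrite [X in _ `<=` X](closure_id _).1 //; apply: closureS.
  by move=> _ [x Ax <-]; exists x => //; apply: subset_closure.
move=> _ [x clx <-] B /gc nB.
have [z [Az Bz]] := clx _ nB.
by exists (g z); split => //; exists z.
Qed.

Lemma not_closure {R : realType} (W : set R) (y e : R) :
  0 < e -> (forall w, W w -> e <= `|w - y|) -> ~ closure W y.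
Proof.
move=> e0 He cl.
have nb : nbhs y (ball y e) by apply: nbhsx_ballx.
have [w [Ww bw]] := cl _ nb.
move: (He w Ww); rewrite leNgt => /negP; apply.
by move: bw; rewrite /ball /= distrC.
Qed.
Lemma fin_pos {R : realType} (g : nat -> R) (n : nat) :
  (forall r, (r < n)%N -> 0 < g r) ->
  exists2 e, 0 < e & forall r, (r < n)%N -> e <= g r.
Proof.
elim: n => [|n IH] H; first by exists 1.
have [e e0 He] := IH (fun r rn => H r (ltnW rn)).
exists (Num.min e (g n)); first by rewrite lt_min e0 H.
move=> r; rewrite ltnS leq_eqVlt => /orP[/eqP->|rn].
  by rewrite ge_min lexx orbT.
by rewrite ge_min He.
Qed.

Lemma near_all (P : nat -> nat -> Prop) (n : nat) :
  (forall r, (r < n)%N -> \forall m \near \oo, P r m) ->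
  \forall m \near \oo, forall r, (r < n)%N -> P r m.
Proof.
elim: n => [|n IH] H; first by near=> m.
have H1 := IH (fun r rn => H r (ltnW rn)).
have H2 := H n (ltnSn n).
near=> m => r; rewrite ltnS leq_eqVlt => /orP[/eqP->|rn].
  by near: m.
by move: r rn; near: m.
Unshelve. all: by end_near.
Qed.

Lemma per_contra {T : Type} (F : T -> T) (n : nat) (y : T) :
  (forall m, (0 < m)%N -> iter (n * m) F y <> y) ->
  forall q, (0 < q)%N -> iter q F y <> y.
Proof.
move=> ne q q0 E; apply: (ne q q0); rewrite mulnC; exact: iter_per.
Qed.

Lemma xbback {T : Type} (F : T -> T) (n : nat) (xb : nat -> T) :
  (forall m, iter n F (xb m.+1) = xb m) ->
  forall q N, (q <= N)%N -> iter (n * q)%N F (xb N) = xb (N - q)%N.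
Proof.
move=> xs; elim=> [|q IH] N qN; first by rewrite muln0 subn0.
rewrite mulnS iterD IH ?(ltnW qN) //.
have -> : (N - q)%N = (N - q.+1)%N.+1 by rewrite subnSK.
by rewrite xs.
Qed.
Definition Wset {R : realType} (F : R -> R) (n : nat) (xb : nat -> R) (y : R) : set R :=
  [set w | exists m r, (r < n)%N /\
     (((0 < m)%N /\ w = iter r F (xb m)) \/
      ((0 < n * m + r)%N /\ w = iter r F (iter (n * m)%N F y)))].

Lemma lim_fix {R : realType} (h : R -> R) (u : nat -> R) :
  continuous h -> cvgn u -> (forall m, h (u m.+1) = u m) \/ (forall m, u m.+1 = h (u m)) ->
  h (lim (u @ \oo)) = lim (u @ \oo).
Proof.
move=> hc cu hu.
have cu' : u @ \oo --> lim (u @ \oo) by [].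
have c1 : (fun m => h (u m)) @ \oo --> h (lim (u @ \oo)).
  exact: (continuous_cvg _ (hc _) cu').
have c2 : (fun m => u m.+1) @ \oo --> lim (u @ \oo) by rewrite cvg_shiftS.
case: hu => hu.
  have c3 : (fun m => h (u m.+1)) @ \oo --> h (lim (u @ \oo)).
    by rewrite (@cvg_shiftS _ (fun m => h (u m))).
  have E : (fun m => h (u m.+1)) = u by apply: funext => m; rewrite hu.
  rewrite E in c3.
  exact: (cvg_unique _ c3 cu').
have E : (fun m => u m.+1) = (fun m => h (u m)) by apply: funext => m; rewrite hu.
rewrite E in c2.
exact: (cvg_unique _ c1 c2).
Qed.
Lemma fin_pos2 {R : realType} (g : nat -> nat -> R) (M n : nat) :
  (forall m r, (m < M)%N -> (r < n)%N -> 0 < g m r) ->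
  exists2 e, 0 < e & forall m r, (m < M)%N -> (r < n)%N -> e <= g m r.
Proof.
elim: M => [|M IH] H; first by exists 1.
have [e e0 He] := IH (fun m r mM rn => H m r (ltnW mM) rn).
have [e' e'0 He'] := @fin_pos R (g M) n (fun r rn => H M r (ltnSn M) rn).
exists (Num.min e e'); first by rewrite lt_min e0 e'0.
move=> m r; rewrite ltnS leq_eqVlt => /orP[/eqP->|mM] rn.
  by rewrite ge_min He' ?orbT.
by rewrite ge_min He.
Qed.

Lemma iso_eps {R : realType} (F : R -> R) (n : nat) (xb : nat -> R) (y : R) :
  continuous F -> (0 < n)%N -> xb 0%N = y -> (forall m, iter n F (xb m.+1) = xb m) ->
  cvgn xb -> cvgn (fun m => iter (n * m)%N F y) ->
  (forall m, (0 < m)%N -> iter (n * m)%N F y <> y) ->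
  exists2 e, 0 < e & forall w, Wset F n xb y w -> e <= `|w - y|.
Proof.
move=> Fc n0 x0 xs cb cf ne.
set h := iter n F.
have hc : continuous h by apply: iter_cont.
set xf := fun m => iter (n * m)%N F y.
have xfS : forall m, xf m.+1 = h (xf m) by move=> m; rewrite /xf mulnS iterD.
have ne' := @per_contra _ F n y ne.
set l := lim (xb @ \oo).
set l' := lim (xf @ \oo).
have hl : h l = l by apply: lim_fix => //; left.
have hl' : h l' = l' by apply: lim_fix => //; right.
have NEl : forall z r, h z = z -> iter r F z != y.
  move=> z r hz; apply/eqP => E.
  apply: (ne' n n0).
  by move: hz; rewrite /h => hz; rewrite -{2}E -E iter_comm hz.
have [e1 e10 He1] := @fin_pos R (fun r => Num.min `|iter r F l - y| `|iter r F l' - y|) n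
  (fun r _ => ltac:(by rewrite lt_min !normr_gt0 !subr_eq0 !NEl)).
have e20 : 0 < e1 / 2 by rewrite divr_gt0.
have ev : \forall m \near \oo, forall r, (r < n)%N ->
    e1 / 2 <= `|iter r F (xb m) - y| /\ e1 / 2 <= `|iter r F (xf m) - y|.
  apply: near_all => r rn.
  have cb' : xb @ \oo --> l by [].
  have cf' : xf @ \oo --> l' by [].
  have c1 : (fun m => iter r F (xb m)) @ \oo --> iter r F l.
    exact: (continuous_cvg _ (@iter_cont _ F r Fc _) cb').
  have c2 : (fun m => iter r F (xf m)) @ \oo --> iter r F l'.
    exact: (continuous_cvg _ (@iter_cont _ F r Fc _) cf').
  have d1 := (cvgrPdist_lt _ _).1 c1 _ e20.
  have d2 := (cvgrPdist_lt _ _).1 c2 _ e20.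
  have := He1 r rn; rewrite le_min => /andP[b1 b2].
  near=> m; split.
    have t1 : `|iter r F l - y| <= `|iter r F l - iter r F (xb m)| + `|iter r F (xb m) - y|.
      exact: ler_distD.
    have t2 : `|iter r F l - iter r F (xb m)| < e1 / 2 by near: m; exact: d1.
    lra.
  have t1 : `|iter r F l' - y| <= `|iter r F l' - iter r F (xf m)| + `|iter r F (xf m) - y|.
    exact: ler_distD.
  have t2 : `|iter r F l' - iter r F (xf m)| < e1 / 2 by near: m; exact: d2.
  lra.
have [M _ HM] := ev.
have NEb : forall m r, (0 < m)%N -> (r < n)%N -> iter r F (xb m) != y.
  move=> m r m0 rn; apply/eqP => E.
  have rle : (r <= n * m)%N by nia.
  apply: (ne' (n * m - r)%N); first by nia.
  rewrite -{1}E -iterD subnK // (@xbback _ F n xb xs m m (leqnn m)) subnn.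
  exact: x0.
have NEf : forall m r, (0 < n * m + r)%N -> iter r F (xf m) != y.
  move=> m r p0; apply/eqP => E; apply: (ne' (r + n * m)%N); first by rewrite addnC.
  by rewrite iterD.
have pos : forall m r, (m < M)%N -> (r < n)%N ->
    0 < Num.min (if (0 < m)%N then `|iter r F (xb m) - y| else 1)
            (if (0 < n * m + r)%N then `|iter r F (xf m) - y| else 1).
  move=> m r _ rn; rewrite lt_min; apply/andP; split.
    case: ifP => m0 //; by rewrite normr_gt0 subr_eq0 NEb.
  case: ifP => p0 //; by rewrite normr_gt0 subr_eq0 NEf.
have [e2 e20' He2] := @fin_pos2 R (fun m r =>
    Num.min (if (0 < m)%N then `|iter r F (xb m) - y| else 1)
            (if (0 < n * m + r)%N then `|iter r F (xf m) - y| else 1)) M n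
  pos.
exists (Num.min (e1 / 2) e2); first by rewrite lt_min e20 e20'.
move=> w [m [r [rn [[m0 ->]|[p0 ->]]]]].
  case: (leqP M m) => Mm.
    by have [h1 h2] := HM m Mm r rn; rewrite ge_min h1.
  rewrite ge_min; apply/orP; right; apply: le_trans (He2 m r Mm rn) _.
  by rewrite ge_min m0 lexx.
case: (leqP M m) => Mm.
  by have [h1 h2] := HM m Mm r rn; rewrite ge_min h2.
rewrite ge_min; apply/orP; right; apply: le_trans (He2 m r Mm rn) _.
by rewrite ge_min p0 lexx orbT.
Unshelve. all: by end_near.
Qed.
Lemma iso_all {R : realType} (a b : R) (F : R -> R) :
  continuous F -> (forall x, a <= F x <= b) -> isoD F ->
  forall k, (0 < k)%N -> exists C : set R,
    [/\ closed C, C `<=` `[a, b], C !=set0, (iter k F) @` C = C &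
        forall j, (0 < j)%N -> (j < k)%N -> (iter j F) @` C <> C].
Proof.
move=> Fc Fr [y [n [xb [n0 x0 xs cb [cf ne]]]]] k k0.
have [e e0 He] := @iso_eps _ F n xb y Fc n0 x0 xs cb cf ne.
pose bw N := iter ((n - 1) * N)%N F (xb N).
have bw0 : bw 0%N = y by rewrite /bw muln0 /= x0.
have bwS : forall N, F (bw N.+1) = bw N.
  move=> N; rewrite /bw -iterS.
  have -> : (((n - 1) * N.+1).+1 = (n - 1) * N + n)%N by nia.
  by rewrite iterD xs.
have bw_it : forall j N, (j <= N)%N -> iter j F (bw N) = bw (N - j)%N.
  elim=> [|j IH] N jN; first by rewrite subn0.
  rewrite iterS IH ?(ltnW jN) //.
  have -> : (N - j)%N = (N - j.+1)%N.+1 by rewrite subnSK.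
  by rewrite bwS.
have bw_it2 : forall j N, (N <= j)%N -> iter j F (bw N) = iter (j - N)%N F y.
  by move=> j N Nj; rewrite -{1}(subnK Nj) iterD bw_it // subnn bw0.
have fwW : forall l, (0 < l)%N -> Wset F n xb y (iter l F y).
  move=> l l0; exists (l %/ n)%N, (l %% n)%N; split; first by rewrite ltn_pmod.
  right; split; first by rewrite mulnC -divn_eq.
  by rewrite -iterD addnC mulnC -divn_eq.
have bwW : forall N, (0 < N)%N -> Wset F n xb y (bw N).
  move=> N N0; set t := ((n - 1) * N)%N.
  have qN : (t %/ n < N)%N by rewrite ltn_divLR // /t; nia.
  exists (N - t %/ n)%N, (t %% n)%N; split; first by rewrite ltn_pmod.
  left; split; first by rewrite subn_gt0.
  rewrite -(@xbback _ F n xb xs (t %/ n) N (ltnW qN)) -iterD /bw -/t.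
  by rewrite {1}(divn_eq t n) addnC mulnC.
pose S := [set w | exists t, w = iter (k * t)%N F y \/ w = bw (k * t)%N].
have Sy : S y by exists 0%N; left; rewrite muln0.
have SC : (iter k F) @` S = S.
  apply/seteqP; split => w.
    move=> [s [t [->|->]] <-].
      by exists t.+1; left; rewrite mulnS iterD.
    case: t => [|t].
      by exists 1%N; left; rewrite muln0 muln1 bw0.
    exists t; right; rewrite bw_it; last by rewrite mulnS leq_addr.
    by rewrite mulnS addKn.
  move=> [t [->|->]].
    case: t => [|t].
      exists (bw (k * 1)%N); first by exists 1%N; right.
      by rewrite muln0 /= muln1 bw_it2 // subnn.
    by exists (iter (k * t)%N F y); [exists t; left | rewrite mulnS iterD].
  exists (bw (k * t.+1)%N); first by exists t.+1; right.
  by rewrite bw_it ?mulnS ?leq_addr // addKn.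
have jW : forall j, (0 < j)%N -> (j < k)%N -> (iter j F) @` S `<=` Wset F n xb y.
  move=> j j0 jk _ [s [t [->|->]] <-].
    by rewrite -iterD; apply: fwW; rewrite addn_gt0 j0.
  case: (leqP j (k * t)) => jt.
    rewrite bw_it //; apply: bwW; rewrite subn_gt0 ltn_neqAle jt andbT.
    apply/eqP => E; case: t E jt => [|t]; first by rewrite muln0 => E; move: j0; rewrite E.
    by move=> E; move: jk; rewrite E mulnS ltnNge leq_addr.
  by rewrite bw_it2; [apply: fwW; rewrite subn_gt0 | exact: ltnW].
have inab : forall z m, a <= z <= b -> a <= iter m F z <= b.
  by move=> z [|m] //= _; apply: Fr.
have xbab : forall N, a <= xb N <= b by move=> N; rewrite -xs; apply: iter_rng.
have Sab : S `<=` `[a, b].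
  move=> w [t [->|->]]; rewrite /= in_itv /=.
    by apply: inab; rewrite -x0.
  by apply: inab.
have clab : closure S `<=` `[a, b].
  by rewrite [X in _ `<=` X](closure_id _).1; [apply: closureS | apply: itv_closed].
exists (closure S); split.
- exact: closed_closure.
- exact: clab.
- by exists y; apply: subset_closure.
- by rewrite (@closure_img _ a b) ?SC //; apply: iter_cont.
move=> j j0 jk E.
have : closure S y by apply: subset_closure.
rewrite -E (@closure_img _ a b) //; last by apply: iter_cont.
move=> cl; apply: (@not_closure _ (Wset F n xb y) y e e0 He).
exact: (closureS (jW j j0 jk)).
Qed.
Definition clampR {R : realType} (a b x : R) := Num.min (Num.max x a) b.

Lemma clamp_in {R : realType} (a b x : R) : a <= b -> a <= clampR a b x <= b.
Proof.
move=> ab; rewrite /clampR ge_min le_min !le_max lexx orbT ab /=.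
by case: (leP x a) => _; rewrite ?lexx ?orbT.
Qed.

Lemma clamp_id {R : realType} (a b x : R) : a <= x <= b -> clampR a b x = x.
Proof.
move=> /andP[ax xb]; rewrite /clampR.
have -> : Num.max x a = x by apply/max_idPl.
by apply/min_idPl.
Qed.

Lemma clamp_cont {R : realType} (a b : R) : continuous (clampR a b).
Proof.
move=> x; rewrite /clampR.
apply: (@continuous_min _ _ (fun x => Num.max x a) (fun=> b)).
  apply: (@continuous_max _ _ (fun x => x) (fun=> a)); first exact: cvg_id.
  exact: cvg_cst.
exact: cvg_cst.
Qed.

Lemma ext_cont {R : realType} (a b : R) (f : R -> R) :
  a <= b -> {within `[a, b], continuous f} -> continuous (fun x => f (clampR a b x)).
Proof.
move=> ab fc x.
set z := clampR a b x.
have Az : `[a, b]%classic z by rewrite /= in_itv /=; apply: clamp_in.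
have cz : clampR a b t @[t --> x] --> within `[a, b] (nbhs z).
  move=> B /= nB.
  have nB' : nbhs z (fun t => `[a, b]%classic t -> B t) := nB.
  have H : nbhs x (fun t => `[a, b]%classic (clampR a b t) -> B (clampR a b t)).
    exact: (clamp_cont a b x _ nB').
  change (nbhs x (fun t => B (clampR a b t))).
  apply: filterS H => t Ht; apply: Ht.
  have := @clamp_in R a b t ab.
  by rewrite /= in_itv.
have fz : f t @[t --> within `[a, b] (nbhs z)] --> f z.
  by rewrite (nbhs_subspace_in Az); apply: (fc z).
exact: (cvg_comp _ _ cz fz).
Qed.
Lemma iter_ind {R : realType} (a b : R) (f : R -> R) (C : set R) :
  (forall x, a <= x <= b -> a <= f x <= b) -> a <= b ->
  C `<=` `[a, b] -> forall j,
  iter j (induced_map f) C = (iter j (fun x => f (clampR a b x))) @` C.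
Proof.
move=> hf ab Cab.
set F := fun x => f (clampR a b x).
have Fr : forall x, a <= F x <= b by move=> x; apply: hf; apply: clamp_in.
have inab : forall z m, a <= z <= b -> a <= iter m F z <= b.
  by move=> z [|m] //= _; apply: Fr.
elim=> [|j IH].
  by apply/seteqP; split => x; [move=> Cx; exists x | move=> [y Cy <-]].
rewrite iterS IH /induced_map; apply/seteqP; split => x.
  move=> [_ [c Cc <-] <-]; exists c => //=.
  rewrite /F (@clamp_id _ a b) //; apply: inab.
  by have := Cab c Cc; rewrite /= in_itv.
move=> [c Cc <-]; exists (iter j F c); first by exists c.
rewrite /= /F (@clamp_id _ a b) //; apply: inab.
by have := Cab c Cc; rewrite /= in_itv.
Qed.

Theorem theorem3p2 (R : realType) (a b : R) (f : R -> R) :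
  a < b ->
  (forall x, a <= x <= b -> a <= f x <= b) ->
  {within `[a, b], continuous f} ->
  Per_hyper a b f = [set 1%N] \/
  Per_hyper a b f = [set 1%N; 2%N] \/
  Per_hyper a b f = [set k : nat | (0 < k)%N].
Proof.
move=> altb hf fc.
have ab : a <= b := ltW altb.
set F := fun x => f (clampR a b x).
have Fc : continuous F by apply: ext_cont.
have Fr : forall x, a <= F x <= b by move=> x; apply: hf; apply: clamp_in.
have one : Per_hyper a b f 1%N.
  have [p pI Fp] := @fixpt _ a b F Fc Fr.
  have fp : f p = p by move: Fp; rewrite /F clamp_id.
  exists [set p]; split.
    split; first by move=> x ->; rewrite /= in_itv.
    split; first by exists p.
    apply: accessible_closed_set1; apply: hausdorff_accessible; exact: Rhausdorff.
  split => //; split; last by move=> j j0 j1; move: j1; rewrite ltnNge j0.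
  by rewrite /= /induced_map image_set1 fp.
case: (pselect (isoD F)) => [iso|niso].
  right; right; apply/seteqP; split => k.
    by move=> [C [_ [k0 _]]].
  move=> /= k0.
  have [C [Ccl Cab C0 HkC Hj]] := @iso_all _ a b F Fc Fr iso k k0.
  exists C; split; first by split.
  split => //; split; first by rewrite (@iter_ind _ a b).
  move=> j j0 jk; rewrite (@iter_ind _ a b) //; exact: Hj.
have le2 : forall k, Per_hyper a b f k -> k = 1%N \/ k = 2%N.
  move=> k [C [[Cab [C0 Ccl]] [k0 [HkC Hj]]]].
  rewrite (@iter_ind _ a b) // in HkC.
  have FF := @noiso_C _ a b F k C Fc Fr k0 niso Ccl C0 Cab HkC.
  have H2 : iter 2 (induced_map f) C = C.
    rewrite (@iter_ind _ a b) //; apply/seteqP; split => x.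
      by move=> [c Cc <-]; have E : iter 2 F c = c := FF c Cc; rewrite E.
    by move=> Cx; exists x => //; exact: (FF x Cx).
  case: k k0 Hj {HkC} => [|[|[|k]]] // _ Hj; [by left | by right |].
  by case: (Hj 2%N).
case: (pselect (Per_hyper a b f 2%N)) => [two|ntwo].
  right; left; apply/seteqP; split => k.
    by move=> /le2 [->|->]; [left | right].
  by move=> /= [->|->].
left; apply/seteqP; split => k.
  move=> Pk; case: (le2 k Pk) => E; first exact: E.
  by exfalso; apply: ntwo; rewrite -E.
by move=> /= ->.
Qed.
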